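(* If $h\in I$ satisfies $\beta(h)=b$ (i.e. $h$ solves WFP), then $(\theta_1,\dots,\theta_k)=(\theta_1(h),\dots,\theta_k(h))$ is a solution of CAP.
   Context: Let $s:[0,B]\to[0,\infty)$ satisfy $s(0)=0$, be strictly increasing, strictly concave, differentiable, with $s'$ continuous on $[0,B]$ (so $s'>0$ is strictly decreasing). Fix $b\in(0,B]$, an integer $k\ge2$, and constants $c_1\ge c_2\ge\cdots\ge c_k>0$. The Constrained Allocation Problem (CAP) is: find $\theta_1,\dots,\theta_k\ge0$ such that (i) $\theta_1+\cdots+\theta_k=b$; (ii) $\theta_1\le\theta_2\le\cdots\le\theta_k$; (iii) $s'(\theta_j)/s'(\theta_i)=c_j/c_i$ whenever $i<j$ and $\theta_j\ge\theta_i>0$; (iv) $s'(\theta_j)/s'(0)\ge c_j/c_i$ whenever $i<j$ and $\theta_j>\theta_i=0$. Let $s'^{(-1)}:[s'(b),s'(0)]\to[0,b]$ denote the inverse of $s'$ restricted to $[0,b]$. An auxiliary function is a continuous, strictly decreasing function $g:I\to\mathbb{R}$ on an interval $I\subseteq\mathbb{R}$ for which there exist $h_{lo}<h_{hi}$ in $I$ with $g(h_{hi})\le s'(b)/c_1$ and $g(h_{lo})\ge s'(0)/c_k$. For $i=1,\dots,k$ and $h\in I$ define $\theta_i(h)=0$ if $c_ig(h)\ge s'(0)$; $\theta_i(h)=s'^{(-1)}(c_ig(h))$ if $s'(b)<c_ig(h)<s'(0)$; and $\theta_i(h)=b$ if $c_ig(h)\le s'(b)$. Let $\beta(h)=\sum_{i=1}^k\theta_i(h)$.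 The Water-Filling Problem (WFP) is: find $h\in I$ with $\beta(h)=b$. *)

(* Defs.v *)
From Stdlib Require Import Reals Lra ClassicalEpsilon.
Open Scope R_scope.

Definition has_deriv_within (f : R -> R) (D : R -> Prop) (x l : R) : Prop :=
  limit1_in (fun y => (f y - f x) / (y - x)) (fun y => D y /\ y <> x) l x.

Definition cont_within (f : R -> R) (D : R -> Prop) (x : R) : Prop :=
  limit1_in f D (f x) x.

Definition closed_itv (a c : R) : R -> Prop := fun x => a <= x <= c.

Definition is_interval (I : R -> Prop) : Prop :=
  forall x y z, I x -> I z -> x <= y <= z -> I y.

Definition strictly_concave_on (s : R -> R) (D : R -> Prop) : Prop :=
  forall x y t, D x -> D y -> x <> y -> 0 < t < 1 ->
    t * s x + (1 - t) * s y < s (t * x + (1 - t) * y).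

Definition utility_hyp (s ds : R -> R) (B : R) : Prop :=
  s 0 = 0 /\
  (forall x, 0 <= x <= B -> 0 <= s x) /\
  (forall x y, 0 <= x -> x < y -> y <= B -> s x < s y) /\
  strictly_concave_on s (closed_itv 0 B) /\
  (forall x, 0 <= x <= B -> has_deriv_within s (closed_itv 0 B) x (ds x)) /\
  (forall x, 0 <= x <= B -> cont_within ds (closed_itv 0 B) x).

(* s'^(-1): inverse of s' restricted to [0,b]; for y in [s'(b), s'(0)] this is
   the (unique) x in [0,b] with s'(x) = y.  Outside that range the value is
   irrelevant (it is never used there). *)
Definition sinv (ds : R -> R) (b y : R) : R :=
  epsilon (inhabits 0) (fun x => 0 <= x <= b /\ ds x = y).

Definition auxiliary (ds : R -> R) (b : R) (k : nat) (c : nat -> R)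
    (I : R -> Prop) (g : R -> R) : Prop :=
  is_interval I /\
  (forall x, I x -> cont_within g I x) /\
  (forall x y, I x -> I y -> x < y -> g y < g x) /\
  exists hlo hhi, I hlo /\ I hhi /\ hlo < hhi /\
    g hhi <= ds b / c 1%nat /\ g hlo >= ds 0 / c k.

Definition theta (ds : R -> R) (b : R) (c : nat -> R) (g : R -> R)
    (i : nat) (h : R) : R :=
  let y := c i * g h in
  if Rle_dec (ds 0) y then 0
  else if Rle_dec y (ds b) then b
  else sinv ds b y.

Fixpoint sum1 (n : nat) (f : nat -> R) : R :=
  match n with
  | O => 0
  | S m => sum1 m f + f (S m)
  end.

Definition beta (ds : R -> R) (b : R) (k : nat) (c : nat -> R) (g : R -> R)
    (h : R) : R :=
  sum1 k (fun i => theta ds b c g i h).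

Definition CAP_solution (ds : R -> R) (b : R) (k : nat) (c : nat -> R)
    (th : nat -> R) : Prop :=
  (forall i, (1 <= i <= k)%nat -> 0 <= th i) /\
  sum1 k th = b /\
  (forall i, (1 <= i < k)%nat -> th i <= th (S i)) /\
  (forall i j, (1 <= i)%nat -> (i < j)%nat -> (j <= k)%nat ->
     th j >= th i -> th i > 0 -> ds (th j) / ds (th i) = c j / c i) /\
  (forall i j, (1 <= i)%nat -> (i < j)%nat -> (j <= k)%nat ->
     th j > th i -> th i = 0 -> ds (th j) / ds 0 >= c j / c i).

(* Main.v *)
Require Import Defs.
From Stdlib Require Import Reals Lra Lia Ranalysis5 ClassicalEpsilon.
Open Scope R_scope.

Lemma div_lt a b c d : 0 < b -> 0 < d -> a * d < c * b -> a / b < c / d.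
Proof.
  intros Hb Hd H.
  replace (a / b) with ((a * d) * / (b * d)) by (field; lra).
  replace (c / d) with ((c * b) * / (b * d)) by (field; lra).
  apply Rmult_lt_compat_r; [apply Rinv_0_lt_compat; nra | exact H].
Qed.

Lemma chord (s : R -> R) B : strictly_concave_on s (closed_itv 0 B) ->
  forall a m z, 0 <= a -> a < m -> m < z -> z <= B ->
  (z - a) * s m > (z - m) * s a + (m - a) * s z.
Proof.
  intros Hc a m z H1 H2 H3 H4.
  set (t := (z - m) / (z - a)).
  assert (Ht : 0 < t < 1).
  { unfold t; split.
    - apply Rdiv_lt_0_compat; lra.
    - apply (Rmult_lt_reg_r (z - a)); [lra|]. unfold Rdiv.
      rewrite Rmult_assoc, Rinv_l by lra. lra. }
  pose proof (Hc a z t) as H.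
  assert (E : t * a + (1 - t) * z = m) by (unfold t; field; lra).
  rewrite E in H.
  assert (H' : t * s a + (1 - t) * s z < s m).
  { apply H; unfold closed_itv; try lra. }
  apply (Rmult_lt_compat_r (z - a)) in H'; [|lra].
  replace ((t * s a + (1 - t) * s z) * (z - a)) with
    ((z - m) * s a + (m - a) * s z) in H' by (unfold t; field; lra).
  lra.
Qed.

Lemma chord_slopes (s : R -> R) B : strictly_concave_on s (closed_itv 0 B) ->
  forall a m z, 0 <= a -> a < m -> m < z -> z <= B ->
  (s z - s a) / (z - a) < (s m - s a) / (m - a) /\
  (s z - s m) / (z - m) < (s z - s a) / (z - a).
Proof.
  intros Hc a m z H1 H2 H3 H4.
  pose proof (chord s B Hc a m z H1 H2 H3 H4).
  split; apply div_lt; nra.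
Qed.

Lemma lim_ge f D l x0 a : limit1_in f D l x0 ->
  (forall alp, alp > 0 -> exists z, D z /\ Rabs (z - x0) < alp /\ a < f z) ->
  a <= l.
Proof.
  intros Hl Hw.
  destruct (Rle_lt_dec a l) as [|Hlt]; auto.
  destruct (Hl (a - l)) as [alp [Ha H]]; [lra|].
  destruct (Hw alp Ha) as [z [Dz [Hz Hf]]].
  specialize (H z (conj Dz Hz)). simpl in H. unfold R_dist in H.
  apply Rabs_def2 in H. lra.
Qed.

Lemma lim_le f D l x0 a : limit1_in f D l x0 ->
  (forall alp, alp > 0 -> exists z, D z /\ Rabs (z - x0) < alp /\ f z < a) ->
  l <= a.
Proof.
  intros Hl Hw.
  destruct (Rle_lt_dec l a) as [|Hlt]; auto.
  destruct (Hl (l - a)) as [alp [Ha H]]; [lra|].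
  destruct (Hw alp Ha) as [z [Dz [Hz Hf]]].
  specialize (H z (conj Dz Hz)). simpl in H. unfold R_dist in H.
  apply Rabs_def2 in H. lra.
Qed.

Lemma wit_right x m alp : x < m -> alp > 0 -> exists z, x < z < m /\ Rabs (z - x) < alp.
Proof.
  intros H Ha. exists (x + Rmin alp (m - x) / 2).
  pose proof (Rmin_l alp (m - x)). pose proof (Rmin_r alp (m - x)).
  assert (0 < Rmin alp (m - x)) by (apply Rmin_glb_lt; lra).
  split; [lra|]. apply Rabs_def1; lra.
Qed.

Lemma wit_left m y alp : m < y -> alp > 0 -> exists z, m < z < y /\ Rabs (z - y) < alp.
Proof.
  intros H Ha. exists (y - Rmin alp (y - m) / 2).
  pose proof (Rmin_l alp (y - m)). pose proof (Rmin_r alp (y - m)).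
  assert (0 < Rmin alp (y - m)) by (apply Rmin_glb_lt; lra).
  split; [lra|]. apply Rabs_def1; lra.
Qed.

Lemma ds_decr s ds B : utility_hyp s ds B ->
  forall x y, 0 <= x -> x < y -> y <= B -> ds y < ds x.
Proof.
  intros [_ [_ [_ [Hc [Hd _]]]]] x y H1 H2 H3.
  set (m := (x + y) / 2).
  assert (Hx : (s m - s x) / (m - x) <= ds x).
  { apply (lim_ge _ _ _ x _ (Hd x ltac:(lra))).
    intros alp Ha. destruct (wit_right x m alp ltac:(unfold m; lra) Ha) as [z [Hz Hz2]].
    exists z. split; [split; [unfold closed_itv, m in *; lra | lra]|]. split; auto.
    apply (chord_slopes s B Hc x z m); unfold m in *; lra. }
  assert (Hy : ds y <= (s y - s m) / (y - m)).
  { apply (lim_le _ _ _ y _ (Hd y ltac:(lra))).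
    intros alp Ha. destruct (wit_left m y alp ltac:(unfold m; lra) Ha) as [z [Hz Hz2]].
    exists z. split; [split; [unfold closed_itv, m in *; lra | lra]|]. split; auto.
    replace ((s z - s y) / (z - y)) with ((s y - s z) / (y - z)) by (field; lra).
    apply (chord_slopes s B Hc m z y); unfold m in *; lra. }
  pose proof (chord_slopes s B Hc x m y ltac:(lra) ltac:(unfold m; lra) ltac:(unfold m; lra) H3).
  lra.
Qed.

Lemma ds_nonneg s ds B : utility_hyp s ds B ->
  forall y, 0 < y -> y <= B -> 0 <= ds y.
Proof.
  intros [_ [_ [Hi [_ [Hd _]]]]] y H1 H2.
  apply (lim_ge _ _ _ y _ (Hd y ltac:(lra))).
  intros alp Ha. destruct (wit_left 0 y alp H1 Ha) as [z [Hz Hz2]].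
  exists z. split; [split; [unfold closed_itv; lra | lra]|]. split; auto.
  replace ((s z - s y) / (z - y)) with ((s y - s z) / (y - z)) by (field; lra).
  apply Rdiv_lt_0_compat; [|lra]. pose proof (Hi z y ltac:(lra) ltac:(lra) H2). lra.
Qed.

Definition clamp (b x : R) := if Rle_dec x 0 then 0 else if Rle_dec x b then x else b.

Lemma sinv_spec s ds B b : utility_hyp s ds B -> 0 < b -> b <= B ->
  forall y, ds b < y < ds 0 -> 0 <= sinv ds b y <= b /\ ds (sinv ds b y) = y.
Proof.
  intros Hu Hb HbB y Hy. unfold sinv. apply epsilon_spec.
  destruct Hu as [_ [_ [_ [_ [_ Hct]]]]].
  assert (Hcl : forall a, 0 <= a <= b -> continuity_pt (fun x => y - ds (clamp b x)) a).
  { intros a Ha. unfold continuity_pt, continue_in, limit1_in, limit_in.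
    intros eps He. destruct (Hct a ltac:(lra) eps He) as [alp [Hal H]].
    exists alp. split; auto. intros x [_ Hx]. simpl in *. unfold R_dist in *.
    assert (Ea : clamp b a = a) by (unfold clamp; destruct (Rle_dec a 0); destruct (Rle_dec a b); lra).
    rewrite Ea.
    replace (y - ds (clamp b x) - (y - ds a)) with (-(ds (clamp b x) - ds a)) by ring.
    rewrite Rabs_Ropp. apply H. split.
    - unfold clamp, closed_itv; destruct (Rle_dec x 0); destruct (Rle_dec x b); lra.
    - apply Rabs_def2 in Hx. apply Rabs_def1;
      unfold clamp; destruct (Rle_dec x 0); destruct (Rle_dec x b); lra. }
  destruct (IVT_interv _ 0 b Hcl Hb) as [z [Hz Ez]].
  - unfold clamp. destruct (Rle_dec 0 0); lra.
  - unfold clamp. destruct (Rle_dec b 0); [lra|]. destruct (Rle_dec b b); lra.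
  - exists z. split; auto.
    assert (clamp b z = z) by (unfold clamp; destruct (Rle_dec z 0); destruct (Rle_dec z b); lra).
    rewrite H in Ez. lra.
Qed.

Lemma div_le a b c d : 0 < b -> 0 < d -> a * d <= c * b -> a / b <= c / d.
Proof.
  intros Hb Hd H.
  replace (a / b) with ((a * d) * / (b * d)) by (field; lra).
  replace (c / d) with ((c * b) * / (b * d)) by (field; lra).
  apply Rmult_le_compat_r; [left; apply Rinv_0_lt_compat; nra | exact H].
Qed.

Lemma sum_nonneg n f : (forall i, (1 <= i <= n)%nat -> 0 <= f i) -> 0 <= sum1 n f.
Proof.
  induction n; simpl; intros H; [lra|].
  assert (0 <= f (S n)) by (apply H; lia).
  assert (0 <= sum1 n f) by (apply IHn; intros; apply H; lia). lra.
Qed.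

Lemma sum_ge n f : (forall i, (1 <= i <= n)%nat -> 0 <= f i) ->
  forall i, (1 <= i <= n)%nat -> f i <= sum1 n f.
Proof.
  induction n; simpl; intros H i Hi; [lia|].
  destruct (Nat.eq_dec i (S n)) as [->|Hne].
  - assert (0 <= sum1 n f) by (apply sum_nonneg; intros; apply H; lia). lra.
  - assert (0 <= f (S n)) by (apply H; lia).
    assert (f i <= sum1 n f) by (apply IHn; [intros; apply H; lia | lia]). lra.
Qed.

Lemma sum_pair n f : (forall i, (1 <= i <= n)%nat -> 0 <= f i) ->
  forall i j, (1 <= i)%nat -> (i < j)%nat -> (j <= n)%nat -> f i + f j <= sum1 n f.
Proof.
  induction n; simpl; intros H i j Hi Hij Hj; [lia|].
  destruct (Nat.eq_dec j (S n)) as [->|Hne].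
  - assert (f i <= sum1 n f) by (apply sum_ge; [intros; apply H; lia | lia]). lra.
  - assert (0 <= f (S n)) by (apply H; lia).
    assert (f i + f j <= sum1 n f) by (apply IHn; [intros; apply H; lia | lia..]). lra.
Qed.

Lemma c_mono k (c : nat -> R) : (forall i, (1 <= i < k)%nat -> c i >= c (S i)) ->
  forall d i, (1 <= i)%nat -> (i + d <= k)%nat -> c (i + d)%nat <= c i.
Proof.
  intros H d; induction d; intros i Hi Hd.
  - rewrite Nat.add_0_r; lra.
  - replace (i + S d)%nat with (S (i + d)) by lia.
    pose proof (H (i + d)%nat ltac:(lia)). pose proof (IHd i Hi ltac:(lia)). lra.
Qed.

Lemma c_le k (c : nat -> R) : (forall i, (1 <= i < k)%nat -> c i >= c (S i)) ->
  forall i j, (1 <= i)%nat -> (i <= j)%nat -> (j <= k)%nat -> c j <= c i.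
Proof.
  intros H i j Hi Hij Hj. replace j with (i + (j - i))%nat by lia.
  apply (c_mono k); auto; lia.
Qed.

Lemma theta_cases ds b c g h i :
  (forall y, ds b < y < ds 0 -> 0 <= sinv ds b y <= b /\ ds (sinv ds b y) = y) ->
  (ds 0 <= c i * g h /\ theta ds b c g i h = 0) \/
  (c i * g h <= ds b /\ c i * g h < ds 0 /\ theta ds b c g i h = b) \/
  (ds b < c i * g h < ds 0 /\ 0 <= theta ds b c g i h <= b /\
     ds (theta ds b c g i h) = c i * g h).
Proof.
  intros Hs. unfold theta.
  destruct (Rle_dec (ds 0) (c i * g h)); [left; auto|].
  destruct (Rle_dec (c i * g h) (ds b)); [right; left; split; [auto|split; [lra|auto]]|].
  right; right. destruct (Hs (c i * g h)) as [H1 H2]; [lra|]. rewrite H2; repeat split; lra.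
Qed.

Theorem proposition2 (s ds : R -> R) (B b : R) (k : nat) (c : nat -> R)
    (I : R -> Prop) (g : R -> R) (h : R) :
  utility_hyp s ds B ->
  0 < b -> b <= B ->
  (2 <= k)%nat ->
  (forall i, (1 <= i < k)%nat -> c i >= c (S i)) ->
  c k > 0 ->
  auxiliary ds b k c I g ->
  I h ->
  beta ds b k c g h = b ->
  CAP_solution ds b k c (fun i => theta ds b c g i h).
Proof.
  intros Hu Hb HbB Hk Hc Hck _ _ Hbeta.
  unfold beta in Hbeta.
  pose proof (sinv_spec s ds B b Hu Hb HbB) as Hs.
  pose proof (ds_decr s ds B Hu) as Hdec.
  assert (Hd0 : ds b < ds 0) by (apply Hdec; lra).
  assert (Hdb : 0 <= ds b) by (apply (ds_nonneg s ds B Hu); lra).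
  set (T := fun i => theta ds b c g i h) in *.
  assert (Hcases : forall i, (ds 0 <= c i * g h /\ T i = 0) \/
    (c i * g h <= ds b /\ c i * g h < ds 0 /\ T i = b) \/
    (ds b < c i * g h < ds 0 /\ 0 <= T i <= b /\ ds (T i) = c i * g h))
    by (intro i; apply theta_cases; auto).
  assert (Hcpos : forall i, (1 <= i <= k)%nat -> 0 < c i).
  { intros i Hi. pose proof (c_le k c Hc i k ltac:(lia) ltac:(lia) ltac:(lia)). lra. }
  assert (Hnn : forall i, (1 <= i <= k)%nat -> 0 <= T i).
  { intros i _. destruct (Hcases i) as [[_ E]|[[_ [_ E]]|[_ [E _]]]]; lra. }
  assert (Hpair : forall i j, (1 <= i)%nat -> (i < j)%nat -> (j <= k)%nat -> T i + T j <= b).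
  { intros i j H1 H2 H3. rewrite <- Hbeta. apply sum_pair; auto. }
  assert (HG : 0 < g h).
  { destruct (Rle_lt_dec (g h) 0) as [Hg|]; auto. exfalso.
    assert (Hb1 : forall i, (1 <= i <= k)%nat -> T i = b).
    { intros i Hi. pose proof (Hcpos i Hi).
      assert (c i * g h <= 0) by nra.
      destruct (Hcases i) as [[? ?]|[[_ [_ E]]|[? _]]]; lra. }
    pose proof (Hpair 1%nat 2%nat ltac:(lia) ltac:(lia) ltac:(lia)).
    rewrite (Hb1 1%nat ltac:(lia)), (Hb1 2%nat ltac:(lia)) in H. lra. }
  split; [exact Hnn|]. split; [exact Hbeta|]. split; [|split].
  - intros i Hi.
    pose proof (c_le k c Hc i (S i) ltac:(lia) ltac:(lia) ltac:(lia)) as Hci.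
    assert (Hy : c (S i) * g h <= c i * g h) by nra.
    pose proof (Hnn (S i) ltac:(lia)).
    destruct (Hcases i) as [[? E1]|[[? [? E1]]|[? [E1 F1]]]];
    destruct (Hcases (S i)) as [[? E2]|[[? [? E2]]|[? [E2 F2]]]]; try lra.
    destruct (Rle_lt_dec (T i) (T (S i))) as [|Hlt]; auto.
    pose proof (Hdec (T (S i)) (T i) ltac:(lra) Hlt ltac:(lra)). lra.
  - intros i j Hi Hij Hj Hge Hpos.
    pose proof (Hpair i j Hi Hij Hj).
    pose proof (Hcpos i ltac:(lia)). pose proof (Hcpos j ltac:(lia)).
    destruct (Hcases i) as [[? E1]|[[? [? E1]]|[? [E1 F1]]]]; try lra.
    destruct (Hcases j) as [[? E2]|[[? [? E2]]|[? [E2 F2]]]]; try lra.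
    rewrite F1, F2. field. split; lra.
  - intros i j Hi Hij Hj Hgt Hz.
    pose proof (Hcpos i ltac:(lia)). pose proof (Hcpos j ltac:(lia)).
    assert (Hyi : ds 0 <= c i * g h).
    { destruct (Hcases i) as [[? E1]|[[? [? E1]]|[? [E1 F1]]]]; try lra.
      rewrite Hz in F1. lra. }
    assert (Hyj : c j * g h <= ds (T j)).
    { destruct (Hcases j) as [[? E2]|[[? [? E2]]|[? [E2 F2]]]]; try lra.
      rewrite E2; lra. }
    apply Rle_ge. apply div_le; try lra.
    assert (0 < c j * g h) by nra. nra.
Qed.
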